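(* Let $V = \{v_1, \dots, v_d\}$ be totally ordered by $v_1 < \cdots < v_d$. Let $\Gamma$ be the order complex (complex of chains) of the poset of intervals $[v_i, v_j] = \{v_i, v_{i+1}, \dots, v_j\}$, $1 \le i \le j \le d$, ordered by inclusion. For a chain $G \in \Gamma$, let $\sigma(G) \subseteq V$ be the set of all endpoints $v_i, v_j$ of the intervals $[v_i, v_j]$ in $G$. Then $\sigma : \Gamma \to 2^V$ makes $\Gamma$ a geometric simplicial subdivision of the simplex $2^V$. Moreover, $\Gamma$ has exactly $2^{d-1}$ facets.
   Context: A simplicial subdivision of $2^V$ is a simplicial complex $\Gamma$ with a map $\sigma : \Gamma \to 2^V$ such that, for each $F \subseteq V$, $\sigma^{-1}(2^F)$ is a subcomplex homeomorphic to a ball of dimension $|F|-1$ whose interior is $\sigma^{-1}(F)$. It is geometric if there is a geometric realization of $\Gamma$ that triangulates a geometric simplex realizing $2^V$, with each face $G$ of $\Gamma$ realized inside the face $\sigma(G)$ of that simplex, and with the relative interior of $G$ contained in the relative interior of $\sigma(G)$. *)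

(* Defs.v *)
From HB Require Import structures.
From mathcomp Require Import all_boot all_order all_algebra.
Set Implicit Arguments. Unset Strict Implicit. Unset Printing Implicit Defensive.
Import Order.TTheory GRing.Theory Num.Theory.

(* V = {v_1 < ... < v_d} is modelled by 'I_d with its natural order.      *)
Definition interval (d : nat) := {p : 'I_d * 'I_d | (p.1 <= p.2)%N}.

Definition ilo d (I : interval d) : 'I_d := (val I).1.
Definition ihi d (I : interval d) : 'I_d := (val I).2.

Definition isub d (I J : interval d) : bool :=
  (ilo J <= ilo I)%N && (ihi I <= ihi J)%N.

Definition is_chain d (G : {set interval d}) : bool :=
  [forall I in G, forall J in G, isub I J || isub J I].

(* Gamma = order complex (all chains, including the empty chain) *)
Definition Gamma d : {set {set interval d}} := [set G | is_chain G].

Definition sigma d (G : {set interval d}) : {set 'I_d} :=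
  \bigcup_(I in G) [set ilo I; ihi I].

Definition facets T (K : {set {set T}}) : {set {set T}} :=
  [set G | maxset (fun H => H \in K) G].

(* The geometric simplex realizing 2^V is the standard simplex in R^d,   *)
(* with vertex v_i at the i-th unit vector; its face F is the set of     *)
(* points supported in F, its relative interior those with support = F.  *)
Local Open Scope ring_scope.
Section Geom.
Variables (R : realFieldType) (d : nat) (T : finType).

Definition in_simplex (x : 'rV[R]_d) : Prop :=
  (forall i, 0 <= x ord0 i) /\ \sum_i x ord0 i = 1.

Definition in_face (F : {set 'I_d}) (x : 'rV[R]_d) : Prop :=
  in_simplex x /\ (forall i, i \notin F -> x ord0 i = 0).

Definition in_face_relint (F : {set 'I_d}) (x : 'rV[R]_d) : Prop :=
  in_simplex x /\ (forall i, (i \in F -> 0 < x ord0 i) /\ (i \notin F -> x ord0 i = 0)).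

Variable f : T -> 'rV[R]_d.

Definition in_conv (G : {set T}) (x : 'rV[R]_d) : Prop :=
  exists lam : T -> R,
    [/\ forall v, v \notin G -> lam v = 0,
        forall v, 0 <= lam v,
        \sum_v lam v = 1
      & x = \sum_v lam v *: f v].

Definition in_relint (G : {set T}) (x : 'rV[R]_d) : Prop :=
  exists lam : T -> R,
    [/\ forall v, v \notin G -> lam v = 0,
        forall v, v \in G -> 0 < lam v,
        \sum_v lam v = 1
      & x = \sum_v lam v *: f v].

Definition aff_indep (G : {set T}) : Prop :=
  forall lam : T -> R,
    (forall v, v \notin G -> lam v = 0) ->
    \sum_v lam v = 0 -> \sum_v lam v *: f v = 0 ->
    forall v, lam v = 0.

(* f is a geometric realization of the complex K (faces are geometric     *)
(* simplices meeting in common faces) triangulating the standard simplex, *)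
(* each face G realized inside the face sigma(G) of the simplex, with the *)
(* relative interior of G inside the relative interior of sigma(G).       *)
Definition geometric_subdivision_realization
    (K : {set {set T}}) (sig : {set T} -> {set 'I_d}) : Prop :=
  [/\ forall G, G \in K -> aff_indep G,
      forall G H, G \in K -> H \in K ->
        forall x, (in_conv G x /\ in_conv H x) <-> in_conv (G :&: H) x,
      forall x, in_simplex x <-> exists2 G, G \in K & in_conv G x,
      forall G, G \in K -> forall x, in_conv G x -> in_face (sig G) x
    & forall G, G \in K -> forall x, in_relint G x -> in_face_relint (sig G) x].

End Geom.

Definition geometric_subdivision (R : realFieldType) (d : nat) (T : finType)
    (K : {set {set T}}) (sig : {set T} -> {set 'I_d}) : Prop :=
  exists f : T -> 'rV[R]_d, geometric_subdivision_realization f K sig.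

(* Main.v *)
Require Import Defs.
From HB Require Import structures.
From mathcomp Require Import all_boot all_order all_algebra.
From mathcomp Require Import zify.
Set Implicit Arguments. Unset Strict Implicit. Unset Printing Implicit Defensive.

Section Combi.
Variable d : nat.
Implicit Types I J K : Defs.interval d.
Implicit Types C D G H : {set Defs.interval d}.

Definition sz I := (ihi I - ilo I)%N.
Definition within (a b : nat) I := (a <= ilo I) && (ihi I <= b).

Lemma ilo_hi I : ilo I <= ihi I. Proof. exact: (valP I). Qed.

Lemma interval_eq I J : ilo I = ilo J -> ihi I = ihi J -> I = J.
Proof.
case: I => [[a b] p]; case: J => [[a' b'] q]; rewrite /ilo /ihi /= => e1 e2.
by apply: val_inj => /=; rewrite e1 e2.
Qed.

Lemma interval_eqn I J : (ilo I : nat) = ilo J -> (ihi I : nat) = ihi J -> I = J.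
Proof. by move=> h1 h2; apply: interval_eq; apply: val_inj. Qed.

Lemma mkI (a b : nat) : a <= b -> b < d -> exists I, (ilo I : nat) = a /\ (ihi I : nat) = b.
Proof.
move=> ab bd.
have ad : a < d by apply: leq_ltn_trans bd.
by exists (exist _ (Ordinal ad, Ordinal bd) ab).
Qed.

Lemma isub_refl I : isub I I. Proof. by rewrite /isub !leqnn. Qed.

Lemma isub_anti I J : isub I J -> isub J I -> I = J.
Proof. rewrite /isub => /andP[h1 h2] /andP[h3 h4]; apply: interval_eqn; lia. Qed.

Lemma isub_sz I J : isub I J -> sz J <= sz I -> I = J.
Proof.
rewrite /isub /sz => /andP[h1 h2] h3.
have := ilo_hi I; have := ilo_hi J => h4 h5.
apply: interval_eqn; lia.
Qed.

Lemma chainP G I J : is_chain G -> I \in G -> J \in G -> isub I J || isub J I.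
Proof. by move=> /forall_inP/(_ I) h hI hJ; move: (h hI) => /forall_inP/(_ J); apply. Qed.

Lemma chainI G : (forall I J, I \in G -> J \in G -> isub I J || isub J I) -> is_chain G.
Proof. by move=> h; apply/forall_inP => I hI; apply/forall_inP => J hJ; apply: h. Qed.

Lemma chain_sub G H : H \subset G -> is_chain G -> is_chain H.
Proof.
move=> /subsetP s hG; apply: chainI => I J hI hJ.
by apply: (chainP hG); apply: s.
Qed.

Lemma chain_top G : is_chain G -> G != set0 ->
  exists2 I, I \in G & forall J, J \in G -> isub J I.
Proof.
move=> hG /set0Pn[i0 hi0].
case: (@arg_maxnP _ i0 (mem G) sz hi0) => I hI hmax.
exists I => // J hJ.
case/orP: (chainP hG hI hJ) => // hIJ.
by rewrite (isub_sz hIJ (hmax J hJ)) isub_refl.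
Qed.

Definition Fam (a n : nat) : {set {set Defs.interval d}} :=
  [set C | [&& is_chain C, [forall I in C, within a (a + n) I] & #|C| == n.+1]].

Lemma chain_card a n C : is_chain C -> (forall I, I \in C -> within a (a + n) I) ->
  #|C| <= n.+1.
Proof.
move=> hC hw.
pose g (I : Defs.interval d) : 'I_n.+1 := inord (sz I).
have gv I : I \in C -> (g I : nat) = sz I.
  move=> /hw; rewrite /within /sz => /andP[h1 h2]; rewrite inordK //.
  rewrite /sz; lia.
rewrite -(card_in_imset (f := g)); last first.
  move=> I J hI hJ /= e.
  have e' : sz I = sz J by rewrite -gv // -[RHS]gv // e.
  case/orP: (chainP hC hI hJ) => h.
    by apply: isub_sz h _; rewrite e'.
  by symmetry; apply: isub_sz h _; rewrite e'.
by apply: leq_trans (max_card _) _; rewrite card_ord.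
Qed.

Lemma dichot a n C : is_chain C ->
  (forall I, I \in C -> within a (a + n.+1) I /\ sz I <= n) ->
  (forall I, I \in C -> within a.+1 (a.+1 + n) I) \/
  (forall I, I \in C -> within a (a + n) I).
Proof.
move=> hC hw.
case: (boolP [exists I in C, ilo I == a :> nat]) => [/exists_inP[I hI /eqP eI]|]; last first.
  move=> /exists_inPn h; left => I hI.
  have := h I hI; have [] := hw I hI; rewrite /within /sz; lia.
case: (boolP [exists J in C, ihi J == a + n.+1 :> nat]) => [/exists_inP[J hJ /eqP eJ]|]; last first.
  move=> /exists_inPn h; right => K hK.
  have := h K hK; have [] := hw K hK; rewrite /within /sz; lia.
exfalso.
have [wI sI] := hw I hI; have [wJ sJ] := hw J hJ.
have := ilo_hi I; have := ilo_hi J.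
case/orP: (chainP hC hI hJ); move: wI wJ sI sJ; rewrite /isub /within /sz; lia.
Qed.

Lemma FamP a n C : reflect [/\ is_chain C, forall I, I \in C -> within a (a + n) I & #|C| = n.+1]
  (C \in Fam a n).
Proof.
rewrite inE; apply: (iffP and3P) => [[h1 /forall_inP h2 /eqP h3]|[h1 h2 h3]]; first by [].
by split => //; [apply/forall_inP | apply/eqP].
Qed.

Lemma sz_top a n T I : (ilo T : nat) = a -> (ihi T : nat) = a + n.+1 ->
  within a (a + n.+1) I -> I != T -> sz I <= n.
Proof.
move=> e1 e2 w; apply: contraNT; rewrite -ltnNge => hs; apply/eqP.
move: w hs; rewrite /within /sz => /andP[h1 h2] h3.
apply: interval_eqn; lia.
Qed.

Lemma Fam_ins a n T C : (ilo T : nat) = a -> (ihi T : nat) = a + n.+1 ->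
  C \in Fam a.+1 n :|: Fam a n -> T |: C \in Fam a n.+1 /\ T \notin C.
Proof.
move=> e1 e2 hC.
have hsub : forall I, I \in C -> isub I T /\ I != T.
  move=> I hI; case/setUP: hC => /FamP[_ hw _]; have := hw I hI;
  rewrite /within /isub e1 e2 => /andP[h1 h2]; split; try (apply/andP; lia);
  apply/eqP => eIT; move: h1 h2; rewrite eIT e1 e2; lia.
have hch : is_chain C by case/setUP: hC => /FamP[].
have hcard : #|C| = n.+1 by case/setUP: hC => /FamP[].
have nTC : T \notin C by apply/negP => /hsub[_]; rewrite eqxx.
split => //; apply/FamP; split.
- apply: chainI => I J /setU1P[->|hI] /setU1P[->|hJ].
  + by rewrite isub_refl.
  + by rewrite (hsub J hJ).1 orbT.
  + by rewrite (hsub I hI).1.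
  + exact: chainP hch hI hJ.
- move=> I /setU1P[->|hI]; first by rewrite /within e1 e2 !leqnn.
  have [] := hsub I hI; rewrite /isub /within e1 e2 => /andP[h1 h2] _; apply/andP; lia.
- by rewrite cardsU1 nTC hcard.
Qed.

Lemma Fam_rec a n : a + n.+1 < d -> #|Fam a n.+1| = (#|Fam a.+1 n| + #|Fam a n|)%N.
Proof.
move=> hd.
have [T [e1 e2]] : exists T : Defs.interval d, (ilo T : nat) = a /\ (ihi T : nat) = a + n.+1.
  exact: (mkI (leq_addr n.+1 a) hd).
have eq : Fam a n.+1 = (fun C => T |: C) @: (Fam a.+1 n :|: Fam a n).
  apply/setP => D; apply/idP/idP; last first.
    by case/imsetP => C hC ->; have [] := Fam_ins e1 e2 hC.
  move=> /FamP[hch hw hc].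
  have TD : T \in D.
    apply: contraLR isT => nTD; exfalso.
    have hs : forall I, I \in D -> within a (a + n.+1) I /\ sz I <= n.
      move=> I hI; split; first exact: hw.
      apply: sz_top e1 e2 (hw I hI) _; apply: contraNneq nTD => <-; exact: hI.
    case: (dichot hch hs) => hw'.
      by have := chain_card hch hw'; rewrite hc ltnn.
    by have := chain_card hch hw'; rewrite hc ltnn.
  apply/imsetP; exists (D :\ T); last by rewrite setD1K.
  have hch' : is_chain (D :\ T) by apply: chain_sub hch; apply: subsetDl.
  have hs : forall I, I \in D :\ T -> within a (a + n.+1) I /\ sz I <= n.
    move=> I /setD1P[nIT hI]; split; first exact: hw.
    exact: sz_top e1 e2 (hw I hI) nIT.
  have hc' : #|D :\ T| = n.+1 by move: hc; rewrite (cardsD1 T) TD => -[].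
  case: (dichot hch' hs) => hw'; apply/setUP; [left|right]; apply/FamP; split => //.
rewrite eq card_in_imset; last first.
  move=> C1 C2 h1 h2 /= e.
  have [_ n1] := Fam_ins e1 e2 h1; have [_ n2] := Fam_ins e1 e2 h2.
  by rewrite -(setU1K n1) -(setU1K n2) e.
rewrite cardsU.
suff -> : Fam a.+1 n :&: Fam a n = set0 by rewrite cards0 subn0.
apply/setP => C; rewrite in_setI in_set0; apply/negbTE/negP => /andP[/FamP[hch w1 c1] /FamP[_ w2 _]].
have : C != set0 by rewrite -cards_eq0 c1.
case/set0Pn => I hI.
clear eq; case: n e2 hd w1 w2 c1 => [|m] e2 hd w1 w2 c1.
  by have := w1 I hI; have := w2 I hI; rewrite /within; have := ilo_hi I; lia.
have w3 : forall J, J \in C -> within a.+1 (a.+1 + m) J.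
  move=> J hJ; have := w1 J hJ; have := w2 J hJ; rewrite /within; lia.
by have := chain_card hch w3; rewrite c1 ltnn.
Qed.

Lemma Fam_base a : a < d -> Fam a 0 = [set [set I | (ilo I == a :> nat) && (ihi I == a :> nat)]].
Proof.
move=> ad; have [T [e1 e2]] := mkI (leqnn a) ad.
have -> : [set I | (ilo I == a :> nat) && (ihi I == a :> nat)] = [set T].
  apply/setP => I; rewrite !inE; apply/idP/idP.
    by move=> /andP[/eqP h1 /eqP h2]; apply/eqP; apply: interval_eqn; rewrite ?e1 ?e2.
  by move/eqP ->; rewrite e1 e2 !eqxx.
apply/setP => C; rewrite in_set1; apply/idP/idP.
  move=> /FamP[_ hw /eqP/cards1P[I eC]]; apply/eqP; rewrite eC; congr [set _].
  have := hw I; rewrite eC inE eqxx /within addn0 => /(_ isT) /andP[h1 h2].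
  by apply: interval_eqn; rewrite ?e1 ?e2; have := ilo_hi I; lia.
move/eqP ->; apply/FamP; split; last by rewrite cards1.
- by apply: chainI => I J /set1P -> /set1P ->; rewrite isub_refl.
- by move=> I /set1P ->; rewrite /within e1 e2 addn0 !leqnn.
Qed.

Lemma Fam_card n a : a + n < d -> #|Fam a n| = 2 ^ n.
Proof.
elim: n a => [|n IH] a hd.
  by rewrite Fam_base ?cards1 //; move: hd; rewrite addn0.
rewrite Fam_rec // IH ?IH; [|by apply: leq_ltn_trans hd; rewrite leq_add2l|by rewrite addSnnS].
by rewrite expnS mul2n addnn.
Qed.

Lemma Fam_ext n a C : a + n < d -> is_chain C -> (forall I, I \in C -> within a (a + n) I) ->
  exists2 D, D \in Fam a n & C \subset D.
Proof.
elim: n a C => [|n IH] a C hd hch hw.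
  exists [set I | (ilo I == a :> nat) && (ihi I == a :> nat)].
    by rewrite Fam_base ?set11 //; move: hd; rewrite addn0.
  apply/subsetP => I /hw; rewrite /within addn0 inE; have := ilo_hi I => h /andP[h1 h2].
  apply/andP; split; apply/eqP; lia.
have [T [e1 e2]] : exists T : Defs.interval d, (ilo T : nat) = a /\ (ihi T : nat) = a + n.+1.
  exact: (mkI (leq_addr n.+1 a) hd).
have hch' : is_chain (C :\ T) by apply: chain_sub hch; apply: subsetDl.
have hs : forall I, I \in C :\ T -> within a (a + n.+1) I /\ sz I <= n.
  move=> I /setD1P[nIT hI]; split; first exact: hw.
  exact: sz_top e1 e2 (hw I hI) nIT.
have [D' hD' sub'] : exists2 D', D' \in Fam a.+1 n :|: Fam a n & C :\ T \subset D'.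
  case: (dichot hch' hs) => hw'.
    have hd1 : a.+1 + n < d by rewrite addSnnS.
    have [D hD sD] := IH a.+1 (C :\ T) hd1 hch' hw'.
    by exists D => //; rewrite inE hD.
  have hd1 : a + n < d by apply: leq_ltn_trans hd; rewrite leq_add2l.
  have [D hD sD] := IH a (C :\ T) hd1 hch' hw'.
  by exists D => //; rewrite inE hD orbT.
have [hF _] := Fam_ins e1 e2 hD'.
exists (T |: D') => //.
apply/subsetP => I hI; case: (eqVneq I T) => [->|nIT]; first by rewrite setU11.
by rewrite in_setU1 (subsetP sub') ?orbT // in_setD1 nIT hI.
Qed.

End Combi.

Lemma within_all m (I : Defs.interval m.+1) : within 0 (0 + m) I.
Proof. by rewrite /within add0n leq0n /= -ltnS ltn_ord. Qed.

Lemma facets_card d : #|facets (Gamma d)| = 2 ^ (d - 1).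
Proof.
case: d => [|m].
  have all0 : forall G : {set Defs.interval 0}, G = set0.
    move=> G; apply/setP => x; exfalso; case: x => [[i j] p]; by case: i p.
  have -> : facets (Gamma 0) = [set set0]; last by rewrite cards1.
  apply/setP => G; rewrite in_set1 (all0 G) eqxx inE.
  apply/maxsetP; split; first by rewrite inE; apply: chainI => I; rewrite inE.
  by move=> B _ _; rewrite (all0 B).
rewrite subSS subn0 -(@Fam_card m.+1 m 0) //.
suff -> : facets (Gamma m.+1) = Fam m.+1 0 m by [].
apply/setP => G; rewrite [in LHS]inE; apply/maxsetP/idP.
  move=> [hG hmax]; rewrite inE in hG.
  have [D hD sGD] := @Fam_ext m.+1 m 0 G (leqnn _) hG (fun I _ => within_all I).
  suff <- : D = G by [].
  by apply: hmax => //; rewrite inE; case/FamP: hD.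
move=> /FamP[hch _ hc]; split; first by rewrite inE.
move=> B; rewrite inE => hB sGB; apply/eqP; rewrite eq_sym eqEcard sGB hc.
exact: (chain_card hB (fun I _ => within_all I)).
Qed.

From mathcomp Require Import ring lra.
Import Order.TTheory GRing.Theory Num.Theory.
Local Open Scope ring_scope.

Section Geo.
Variables (R : realFieldType) (d : nat).
Local Notation itv := (Defs.interval d).
Implicit Types I J : itv.
Implicit Types lam mu : itv -> R.

Definition c I (k : 'I_d) : R := ((ilo I == k)%:R + (ihi I == k)%:R) / 2.
Definition Sm lam k := \sum_v lam v * c v k.
Definition supp lam : {set itv} := [set v | lam v != 0].

Lemma sum_ind (i : 'I_d) : \sum_k ((i == k)%:R : R) = 1.
Proof.
rewrite (bigD1 i) //= eqxx big1 ?addr0 // => k /negbTE; by rewrite eq_sym => ->.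
Qed.

Lemma c_ge0 I k : 0 <= c I k.
Proof. by rewrite /c divr_ge0 ?addr_ge0 ?ler0n. Qed.

Lemma c_sum I : \sum_k c I k = 1.
Proof.
rewrite /c -mulr_suml big_split /= !sum_ind; by field.
Qed.

Lemma c_eq0 I k : k != ilo I -> k != ihi I -> c I k = 0.
Proof. by rewrite /c => /negbTE h1 /negbTE h2; rewrite eq_sym h1 eq_sym h2 addr0 mul0r. Qed.

Lemma c_lo I : ilo I != ihi I -> c I (ilo I) = 2^-1.
Proof. by move=> /negbTE h; rewrite /c eqxx eq_sym h addr0 mul1r. Qed.

Lemma c_hi I : ilo I != ihi I -> c I (ihi I) = 2^-1.
Proof. by move=> /negbTE h; rewrite /c eqxx h add0r mul1r. Qed.

Lemma c_one I : ilo I = ihi I -> c I (ilo I) = 1.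
Proof. by move=> h; rewrite /c -h eqxx /=; by field. Qed.

Lemma c_lo_ge I : 2^-1 <= c I (ilo I).
Proof.
case: (eqVneq (ilo I) (ihi I)) => h; last by rewrite c_lo.
rewrite c_one //; lra.
Qed.

Lemma c_hi_ge I : 2^-1 <= c I (ihi I).
Proof.
case: (eqVneq (ilo I) (ihi I)) => h; last by rewrite c_hi.
rewrite -h c_one //; lra.
Qed.

Lemma c_nz I k : c I k != 0 -> (k == ilo I) || (k == ihi I).
Proof.
apply: contraR; rewrite negb_or => /andP[h1 h2]; by rewrite c_eq0.
Qed.

Definition nonneg lam := forall v, 0 <= lam v.

Lemma Sm_term lam v k : nonneg lam -> lam v * c v k <= Sm lam k.
Proof.
move=> hl; rewrite /Sm (bigD1 v) //= lerDl sumr_ge0 // => w _.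
by rewrite mulr_ge0 ?c_ge0.
Qed.

Lemma Sm_ge0 lam k : nonneg lam -> 0 <= Sm lam k.
Proof. by move=> hl; rewrite sumr_ge0 // => w _; rewrite mulr_ge0 ?c_ge0. Qed.

Lemma Sm_pos lam v : nonneg lam -> lam v != 0 ->
  0 < Sm lam (ilo v) /\ 0 < Sm lam (ihi v).
Proof.
move=> hl hv.
have lp : 0 < lam v by rewrite lt_def hv hl.
have h1 := Sm_term v (ilo v) hl; have h2 := Sm_term v (ihi v) hl.
have h4 := c_lo_ge v; have h3 := c_hi_ge v.
split.
  apply: lt_le_trans h1; apply: mulr_gt0 => //; apply: lt_le_trans h4; rewrite invr_gt0; lra.
apply: lt_le_trans h2; apply: mulr_gt0 => //; apply: lt_le_trans h3; rewrite invr_gt0; lra.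
Qed.

Lemma Sm_nz lam k : Sm lam k != 0 -> exists v, lam v != 0 /\ c v k != 0.
Proof.
move=> hS; case: (boolP [exists v, (lam v != 0) && (c v k != 0)]).
  by move=> /existsP[v /andP[h1 h2]]; exists v.
move=> /existsPn hn; exfalso; move/eqP: hS; apply; apply: big1 => v _.
case: (eqVneq (lam v) 0) => [->|h]; first by rewrite mul0r.
case: (eqVneq (c v k) 0) => [->|h']; first by rewrite mulr0.
by have := hn v; rewrite h h'.
Qed.

Lemma Sm_split lam I k : Sm lam k = lam I * c I k + \sum_(v | v != I) lam v * c v k.
Proof. by rewrite /Sm (bigD1 I). Qed.


Lemma sum_nz (P : pred itv) (F : itv -> R) : \sum_(v | P v) F v != 0 -> exists v, P v /\ F v != 0.
Proof.
move=> hS; case: (boolP [exists v, P v && (F v != 0)]).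
  by move=> /existsP[v /andP[h1 h2]]; exists v.
move=> /existsPn hn; exfalso; move/eqP: hS; apply; apply: big1 => v hv.
by apply/eqP; have := hn v; rewrite hv /= negbK.
Qed.

Lemma c_nzn I k : c I k != 0 -> (k : nat) = ilo I \/ (k : nat) = ihi I.
Proof. by move/c_nz => /orP[/eqP->|/eqP->]; [left|right]. Qed.

Lemma top_span lam I : nonneg lam -> (forall J, lam J != 0 -> isub J I) ->
  forall k, Sm lam k != 0 -> (ilo I <= k <= ihi I)%N.
Proof.
move=> hl ht k /Sm_nz[v [hv hc]].
have := ht v hv; have := ilo_hi v; rewrite /isub.
case: (c_nzn hc) => ->; lia.
Qed.

Lemma zero_rep lam : nonneg lam -> (forall k, Sm lam k = 0) -> forall v, lam v = 0.
Proof.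
move=> hl h0 v; apply/eqP; apply: contraT => hv.
have [p _] := Sm_pos hl hv; by rewrite h0 ltxx in p.
Qed.

Lemma top_val lam I : nonneg lam -> is_chain (supp lam) -> lam I != 0 ->
  (forall J, lam J != 0 -> isub J I) ->
  (ilo I = ihi I /\ lam I = Sm lam (ilo I)) \/
  (ilo I != ihi I /\ lam I * 2^-1 <= Sm lam (ilo I) /\ lam I * 2^-1 <= Sm lam (ihi I) /\
   (lam I * 2^-1 = Sm lam (ilo I) \/ lam I * 2^-1 = Sm lam (ihi I))).
Proof.
move=> hl hch hI ht.
case: (eqVneq (ilo I) (ihi I)) => e.
  left; split => //; rewrite (Sm_split lam I) c_one // mulr1 big1 ?addr0 // => v hvI.
  case: (eqVneq (lam v) 0) => [->|hv]; first by rewrite mul0r.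
  exfalso; move/negP: hvI; apply; apply/eqP.
  have := ht v hv; have := ilo_hi v; rewrite /isub => h1 /andP[h2 h3].
  have e' : (ilo I : nat) = ihi I by rewrite e.
  apply: interval_eqn; lia.
right; split => //.
rewrite !(Sm_split lam I) c_lo // c_hi //.
set A := \sum_(v | v != I) lam v * c v (ilo I).
set B := \sum_(v | v != I) lam v * c v (ihi I).
have A0 : 0 <= A by apply: sumr_ge0 => v _; rewrite mulr_ge0 ?c_ge0.
have B0 : 0 <= B by apply: sumr_ge0 => v _; rewrite mulr_ge0 ?c_ge0.
have L0 : 0 <= lam I * 2^-1 by rewrite mulr_ge0 // invr_ge0 ler0n.
suff : A = 0 \/ B = 0.
  case=> ->; rewrite addr0.
    split; first exact: lexx.
    split; first by rewrite lerDl.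
    by left.
  split; first by rewrite lerDl.
  split; first exact: lexx.
  by right.
case: (eqVneq A 0) => [->|hA]; first by left.
case: (eqVneq B 0) => [->|hB]; first by right.
exfalso.
have [v [vI hv]] := sum_nz hA; have [w [wI hw]] := sum_nz hB.
have lv : lam v != 0 by apply: contraNneq hv => ->; rewrite mul0r.
have cv : c v (ilo I) != 0 by apply: contraNneq hv => ->; rewrite mulr0.
have lw : lam w != 0 by apply: contraNneq hw => ->; rewrite mul0r.
have cw : c w (ihi I) != 0 by apply: contraNneq hw => ->; rewrite mulr0.
have sv := ht v lv; have sw := ht w lw.
have hv' := c_nzn cv; have hw' := c_nzn cw.
have := ilo_hi v; have := ilo_hi w.
move: sv sw; rewrite /isub => /andP[s1 s2] /andP[s3 s4] h1 h2.
have ev : (ilo v : nat) = ilo I by case: hv' => e1; clear -e1 s1 s2 s3 s4 h1 h2; lia.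
have ew : (ihi w : nat) = ihi I by case: hw' => e1; clear -e1 s1 s2 s3 s4 h1 h2; lia.
clear hv' hw' cv cw hA hB A0 B0 hI.
have := chainP hch (_ : v \in supp lam) (_ : w \in supp lam).
rewrite !inE => /(_ lv lw).
case/orP => /andP[s5 s6].
- by move/negP: wI; apply; apply/eqP; apply: interval_eqn; clear -ev ew s1 s2 s3 s4 s5 s6 h1 h2; lia.
- by move/negP: vI; apply; apply/eqP; apply: interval_eqn; clear -ev ew s1 s2 s3 s4 s5 s6 h1 h2; lia.
Qed.


Lemma same_top lam mu I I' : nonneg lam -> nonneg mu ->
  lam I != 0 -> (forall J, lam J != 0 -> isub J I) ->
  mu I' != 0 -> (forall J, mu J != 0 -> isub J I') ->
  (forall k, Sm lam k = Sm mu k) -> I = I'.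
Proof.
move=> hl hm hI tI hI' tI' hS.
have [p1 p2] := Sm_pos hl hI; have [q1 q2] := Sm_pos hm hI'.
have n1 : Sm mu (ilo I) != 0 by rewrite -hS gt_eqF.
have n2 : Sm mu (ihi I) != 0 by rewrite -hS gt_eqF.
have n3 : Sm lam (ilo I') != 0 by rewrite hS gt_eqF.
have n4 : Sm lam (ihi I') != 0 by rewrite hS gt_eqF.
have a1 := top_span hm tI' n1; have a2 := top_span hm tI' n2.
have b1 := top_span hl tI n3; have b2 := top_span hl tI n4.
apply: interval_eqn; clear -a1 a2 b1 b2; lia.
Qed.

Lemma drop_Sm lam I k : Sm (fun v => if v == I then 0 else lam v) k = Sm lam k - lam I * c I k.
Proof.
rewrite (Sm_split _ I) (Sm_split lam I) eqxx mul0r add0r.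
rewrite addrAC subrr add0r; apply: eq_bigr => v /negbTE ->; by [].
Qed.

Lemma uniq_rep n lam mu : (#|supp lam| + #|supp mu| <= n)%N -> nonneg lam -> nonneg mu ->
  is_chain (supp lam) -> is_chain (supp mu) -> (forall k, Sm lam k = Sm mu k) ->
  forall v, lam v = mu v.
Proof.
elim: n lam mu => [|n IH] lam mu hn hl hm cl cm hS.
  move=> v; have e1 : supp lam = set0 by apply: cards0_eq; clear -hn; lia.
  have e2 : supp mu = set0 by apply: cards0_eq; clear -hn; lia.
  have : v \notin supp lam by rewrite e1 inE.
  have : v \notin supp mu by rewrite e2 inE.
  by rewrite !inE !negbK => /eqP -> /eqP ->.
case: (eqVneq (supp lam) set0) => [e|nel].
  have z1 : forall k, Sm lam k = 0.
    move=> k; apply: big1 => v _.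
    have : v \notin supp lam by rewrite e inE.
    by rewrite inE negbK => /eqP ->; rewrite mul0r.
  move=> v; rewrite (zero_rep hl z1) (zero_rep hm) // => k; by rewrite -hS.
case: (eqVneq (supp mu) set0) => [e|nem].
  have z1 : forall k, Sm mu k = 0.
    move=> k; apply: big1 => v _.
    have : v \notin supp mu by rewrite e inE.
    by rewrite inE negbK => /eqP ->; rewrite mul0r.
  move=> v; rewrite (zero_rep hm z1) (zero_rep hl) // => k; by rewrite hS.
have [I hI tI] := chain_top cl nel; have [I' hI' tI'] := chain_top cm nem.
move: hI hI'; rewrite !inE => hI hI'.
have tI2 : forall J, lam J != 0 -> isub J I by move=> J hJ; apply: tI; rewrite inE.
have tI2' : forall J, mu J != 0 -> isub J I' by move=> J hJ; apply: tI'; rewrite inE.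
have eI := same_top hl hm hI tI2 hI' tI2' hS; subst I'.
have eq : lam I = mu I.
  have L2 : (2 : R)^-1 != 0 by rewrite invr_eq0 pnatr_eq0.
  have := top_val hl cl hI tI2; have := top_val hm cm hI' tI2'; rewrite -!hS.
  case=> [[e1 h1]|[e1 [h1 [h2 h3]]]] [[e2 h4]|[e2 [h5 [h6 h7]]]].
  - by rewrite h1 h4.
  - by rewrite e1 eqxx in e2.
  - by rewrite e2 eqxx in e1.
  - apply: (mulIf L2).
    set X := lam I * 2^-1 in h5 h6 h7 *; set Y := mu I * 2^-1 in h1 h2 h3 *.
    clear -h1 h2 h3 h5 h6 h7.
    by case: h3 => h3; case: h7 => h7; lra.
pose lam' v := if v == I then 0 else lam v.
pose mu' v := if v == I then 0 else mu v.
have sl : supp lam' = supp lam :\ I.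
  by apply/setP => v; rewrite !inE /lam'; case: (v == I); rewrite ?eqxx.
have sm : supp mu' = supp mu :\ I.
  by apply/setP => v; rewrite !inE /mu'; case: (v == I); rewrite ?eqxx.
have IH' := IH lam' mu'.
have hn' : (#|supp lam'| + #|supp mu'| <= n)%N.
  move: hn; rewrite sl sm (cardsD1 I (supp lam)) (cardsD1 I (supp mu)) !inE hI hI' /=.
  clear; lia.
have nl : nonneg lam' by move=> v; rewrite /lam'; case: (v == I).
have nm : nonneg mu' by move=> v; rewrite /mu'; case: (v == I).
have cl' : is_chain (supp lam') by rewrite sl; apply: chain_sub cl; apply: subsetDl.
have cm' : is_chain (supp mu') by rewrite sm; apply: chain_sub cm; apply: subsetDl.
have hS' : forall k, Sm lam' k = Sm mu' k by move=> k; rewrite !drop_Sm hS eq.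
have h := IH' hn' nl nm cl' cm' hS'.
move=> v; case: (eqVneq v I) => [->//|nvI].
by have := h v; rewrite /lam' /mu' (negbTE nvI).
Qed.


Lemma Sm_add a b k : Sm (fun v => a v + b v) k = Sm a k + Sm b k.
Proof. by rewrite /Sm -big_split; apply: eq_bigr => v _; rewrite mulrDl. Qed.

Lemma Sm_delta I s k : Sm (fun v => if v == I then s else 0) k = s * c I k.
Proof.
rewrite (Sm_split _ I) eqxx big1 ?addr0 // => v /negbTE ->; by rewrite mul0r.
Qed.

Lemma exist_rep n (x : 'I_d -> R) : (forall k, 0 <= x k) -> (#|[set k | x k != 0%R]| <= n)%N ->
  exists lam, [/\ nonneg lam, is_chain (supp lam) & forall k, Sm lam k = x k].
Proof.
elim: n x => [|n IH] x hx hn.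
  have e : [set k | x k != 0] = set0 by apply: cards0_eq; clear -hn; lia.
  exists (fun _ => 0); split => //.
  - apply: chainI => I J; by rewrite inE eqxx.
  - move=> k; rewrite /Sm big1 => [|v _]; last by rewrite mul0r.
    have : k \notin [set k | x k != 0] by rewrite e inE.
    by rewrite inE negbK => /eqP ->.
set sx := [set k | x k != 0] in hn.
case: (eqVneq sx set0) => [e|ne].
  exists (fun _ => 0); split => //.
  - apply: chainI => I J; by rewrite inE eqxx.
  - move=> k; rewrite /Sm big1 => [|v _]; last by rewrite mul0r.
    have : k \notin sx by rewrite e inE.
    by rewrite inE negbK => /eqP ->.
have [k0 hk0] := set0Pn _ ne.
case: (@arg_minnP _ k0 (mem sx) (fun k : 'I_d => (k : nat)) hk0) => lo hlo minlo.
case: (@arg_maxnP _ k0 (mem sx) (fun k : 'I_d => (k : nat)) hk0) => hi hhi maxhi.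
have lohi : (lo <= hi)%N by apply: minlo.
have span : forall k, x k != 0 -> (lo <= k <= hi)%N.
  move=> k hk; have hk' : k \in sx by rewrite inE.
  by rewrite (minlo k hk'); apply: (maxhi k hk').
pose I : itv := exist _ (lo, hi) lohi.
have eIlo : ilo I = lo by [].
have eIhi : ihi I = hi by [].
have xlo : 0 < x lo by rewrite lt_def hx andbT; have h : lo \in sx := hlo; by move: h; rewrite inE.
have xhi : 0 < x hi by rewrite lt_def hx andbT; have h : hi \in sx := hhi; by move: h; rewrite inE.
case: (eqVneq lo hi) => [elh|nlh].
  exists (fun v => if v == I then x lo else 0); split.
  - by move=> v; case: (v == I); rewrite ?hx.
  - apply: chainI => J K; rewrite !inE.
    case: (eqVneq J I) => [->|]; last by rewrite eqxx.
    case: (eqVneq K I) => [->|]; last by rewrite eqxx.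
    by rewrite isub_refl.
  - move=> k; rewrite Sm_delta.
    case: (eqVneq k lo) => [->|nk]; first by rewrite -eIlo c_one ?mulr1 // eIlo eIhi.
    rewrite c_eq0 ?mulr0 ?eIlo ?eIhi -?elh //.
    apply/esym/eqP; apply: contraT => hk.
    have := span k hk; rewrite -elh => h.
    have e : k == lo by apply/eqP; apply: val_inj => /=; clear -h; lia.
    by rewrite e in nk.
have nIlh : ilo I != ihi I by [].
pose t := Num.min (x lo) (x hi).
have t0 : 0 < t by rewrite lt_min xlo xhi.
have tlo : t <= x lo by rewrite ge_min lexx.
have thi : t <= x hi by rewrite ge_min lexx orbT.
pose x' k := x k - (t *+ 2) * c I k.
have x'lo : x' lo = x lo - t by rewrite /x' -eIlo c_lo // mulr2n; field.
have x'hi : x' hi = x hi - t by rewrite /x' -eIhi c_hi // mulr2n; field.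
have x'k : forall k, k != lo -> k != hi -> x' k = x k.
  by move=> k h1 h2; rewrite /x' c_eq0 ?mulr0 ?subr0.
have hx' : forall k, 0 <= x' k.
  move=> k; case: (eqVneq k lo) => [->|n1]; first by rewrite x'lo subr_ge0.
  case: (eqVneq k hi) => [->|n2]; first by rewrite x'hi subr_ge0.
  by rewrite x'k.
have sub' : forall k, x' k != 0 -> x k != 0.
  move=> k; case: (eqVneq k lo) => [->|n1]; first by move=> _; rewrite gt_eqF.
  case: (eqVneq k hi) => [->|n2]; first by move=> _; rewrite gt_eqF.
  by rewrite x'k.
have hn' : (#|[set k | x' k != 0%R]| <= n)%N.
  have [j [hj xj]] : exists j, j \in sx /\ x' j = 0.
    case: (leP (x lo) (x hi)) => h.
      exists lo; split => //; rewrite x'lo /t; have -> : Num.min (x lo) (x hi) = x lo.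
        by apply/min_idPl.
      by rewrite subrr.
    exists hi; split => //; rewrite x'hi /t; have -> : Num.min (x lo) (x hi) = x hi.
      by apply/min_idPr; apply: ltW.
    by rewrite subrr.
  have : [set k | x' k != 0] \subset sx :\ j.
    apply/subsetP => k; rewrite !inE => hk; rewrite sub' // andbT.
    by apply: contraNneq hk => ->; rewrite xj.
  move/subset_leq_card; move: hn; rewrite (cardsD1 j sx) hj.
  by clear; lia.
have [lam' [nl' cl' Sl']] := IH x' hx' hn'.
exists (fun v => lam' v + (if v == I then t *+ 2 else 0)); split.
- move=> v; apply: addr_ge0 => //; case: (v == I) => //.
  by rewrite mulrn_wge0 // ltW.
- have inI : forall J, lam' J != 0 -> isub J I.
    move=> J hJ; have [p1 p2] := Sm_pos nl' hJ.
    move: p1 p2; rewrite !Sl' => p1 p2.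
    have := span _ (sub' _ (lt0r_neq0 p1)).
    have := span _ (sub' _ (lt0r_neq0 p2)).
    rewrite /isub eIlo eIhi; clear; lia.
  apply: chainI => J K; rewrite !inE.
  case: (eqVneq J I) => [->|nJ]; case: (eqVneq K I) => [->|nK].
  + by rewrite isub_refl.
  + by rewrite addr0 => _ hK; rewrite inI // orbT.
  + by rewrite addr0 => hJ _; rewrite inI.
  + rewrite !addr0 => hJ hK; apply: (chainP cl'); by rewrite inE.
- move=> k; rewrite Sm_add Sm_delta Sl' /x'; by rewrite subrK.
Qed.

End Geo.

Section Main.
Variables (R : realFieldType) (d : nat).
Local Notation itv := (Defs.interval d).
Implicit Types lam mu : itv -> R.

Definition fR (I : itv) : 'rV[R]_d := \row_k c R I k.

Lemma vec_coord lam k : (\sum_v lam v *: fR v) ord0 k = Sm lam k.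
Proof. rewrite summxE; apply: eq_bigr => v _; by rewrite !mxE. Qed.

Lemma sum_Sm lam : \sum_k Sm lam k = \sum_v lam v.
Proof.
rewrite /Sm exchange_big; apply: eq_bigr => v _; by rewrite -mulr_sumr c_sum mulr1.
Qed.

Lemma supp_sub lam (G : {set itv}) : (forall v, v \notin G -> lam v = 0) -> supp lam \subset G.
Proof.
move=> h; apply/subsetP => v; rewrite inE; apply: contraR => hv; by rewrite h.
Qed.

Lemma conv_simplex (G : {set itv}) x : in_conv fR G x -> in_simplex x.
Proof.
case=> lam [h1 h2 h3 ->]; split.
  by move=> i; rewrite vec_coord Sm_ge0.
by rewrite (eq_bigr (fun i => Sm lam i)) ?sum_Sm // => i _; rewrite vec_coord.
Qed.

Lemma off_sigma (G : {set itv}) lam i : (forall v, v \notin G -> lam v = 0) ->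
  i \notin sigma G -> Sm lam i = 0.
Proof.
move=> h1 hi; apply: big1 => v _.
case: (boolP (v \in G)) => hv; last by rewrite h1 // mul0r.
rewrite c_eq0 ?mulr0 //.
  apply: contraNneq hi => ->; apply/bigcupP; exists v => //; by rewrite !inE eqxx.
apply: contraNneq hi => ->; apply/bigcupP; exists v => //; by rewrite !inE eqxx orbT.
Qed.

Lemma geo : geometric_subdivision R (Gamma d) (@sigma d).
Proof.
exists fR; split.
- move=> G; rewrite inE => hG lam h0 _ hvec v.
  pose lp v := if 0 <= lam v then lam v else 0.
  pose lm v := if 0 <= lam v then 0 else - lam v.
  have dec : forall v, lam v = lp v - lm v.
    by move=> w; rewrite /lp /lm /=; case: ifP => h; rewrite ?subr0 ?sub0r ?opprK.
  have nlp : nonneg lp by move=> w; rewrite /lp; case: ifP.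
  have nlm : nonneg lm.
    move=> w; rewrite /lm; case: ifP => // /negbT; rewrite -ltNge oppr_ge0; exact: ltW.
  have zp : forall w, w \notin G -> lp w = 0 by move=> w /h0; rewrite /lp => ->; rewrite lexx.
  have zm : forall w, w \notin G -> lm w = 0 by move=> w /h0; rewrite /lm => ->; rewrite lexx.
  have cp : is_chain (supp lp) by apply: chain_sub hG; apply: supp_sub.
  have cm : is_chain (supp lm) by apply: chain_sub hG; apply: supp_sub.
  have hS : forall k, Sm lp k = Sm lm k.
    move=> k; apply/eqP; rewrite -subr_eq0; apply/eqP.
    have := congr1 (fun m : 'rV[R]_d => m ord0 k) hvec; rewrite /= vec_coord mxE => <-.
    rewrite /Sm -sumrB; apply: eq_bigr => w _; by rewrite dec mulrBl.
  by rewrite dec (uniq_rep (leqnn _) nlp nlm cp cm hS) subrr.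
- move=> G H; rewrite !inE => hG hH x; split.
    case=> [[lam [h1 h2 h3 e1]] [mu [g1 g2 g3 e2]]].
    have cl : is_chain (supp lam) by apply: chain_sub hG; apply: supp_sub.
    have cm : is_chain (supp mu) by apply: chain_sub hH; apply: supp_sub.
    have hS : forall k, Sm lam k = Sm mu k.
      by move=> k; rewrite -!vec_coord -e1 -e2.
    have eq := uniq_rep (leqnn _) h2 g2 cl cm hS.
    exists lam; split => // v; rewrite in_setI negb_and => /orP[] hv; first exact: h1.
    by rewrite eq g1.
  case=> lam [h1 h2 h3 e]; split; exists lam; split => // v hv; apply: h1;
    by rewrite in_setI negb_and hv ?orbT.
- move=> x; split; last by case=> G _; apply: conv_simplex.
  case=> hpos hsum.
  have [lam [nl cl Sl]] := exist_rep (x := fun k => x ord0 k) hpos (leqnn _).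
  exists (supp lam); first by rewrite inE.
  exists lam; split => //.
  + by move=> v; rewrite inE negbK => /eqP.
  + by rewrite -sum_Sm -hsum; apply: eq_bigr => k _; rewrite Sl.
  + by apply/rowP => k; rewrite vec_coord Sl.
- move=> G _ x hx; split; first exact: conv_simplex hx.
  case: hx => lam [h1 h2 h3 ->] i hi; by rewrite vec_coord (off_sigma h1).
- move=> G _ x [lam [h1 h2 h3 e]].
  have nl : nonneg lam.
    by move=> v; case: (boolP (v \in G)) => hv; [apply: ltW; apply: h2|rewrite h1].
  split; first by apply: (@conv_simplex G); exists lam.
  move=> i; rewrite e vec_coord; split; last exact: off_sigma.
  move=> /bigcupP[v hv]; rewrite !inE => hi.
  have [p1 p2] := Sm_pos nl (lt0r_neq0 (h2 v hv)).
  by case/orP: hi => /eqP ->.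
Qed.

End Main.

Local Close Scope ring_scope.

Theorem lemma6p2 (d : nat) :
  (forall R : realFieldType, geometric_subdivision R (Gamma d) (@sigma d))
  /\ #|facets (Gamma d)| = 2 ^ (d - 1).
Proof.
split; first by move=> R; apply: geo.
exact: facets_card.
Qed.
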